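(* Let $G$ be any graph of order $n$ and let $H$ be any graph with root vertex $v$. Then $$n\gamma_{oir2}(H)-\alpha(G)\leq \gamma_{oir2}(G\circ_v H)\leq n\gamma_{oir2}(H)+\beta(G).$$
   Context: All graphs are finite and simple. $\alpha(F)$ is the independence number and $\beta(F)=|V(F)|-\alpha(F)$ the vertex cover number of a graph $F$. For a graph $G$, a function $f:V(G)\to\mathcal{P}(\{1,2\})$ is an outer-independent 2-rainbow dominating function (OI2RD function) if every vertex $v$ with $f(v)=\emptyset$ satisfies $\bigcup_{u\in N(v)}f(u)=\{1,2\}$ and the set $\{v: f(v)=\emptyset\}$ is independent. The weight of $f$ is $\sum_{v}|f(v)|$ and $\gamma_{oir2}(G)$ is the minimum weight of an OI2RD function of $G$. For a graph $G$ with $V(G)=\{g_1,\dots,g_n\}$ and a graph $H$ with a distinguished vertex (root) $v$, the rooted product $G\circ_v H$ has vertex set $V(G)\times V(H)$ and edge set $\bigcup_{i=1}^n\{(g_i,h)(g_i,h') : hh'\in E(H)\}\cup\{(g_i,v)(g_j,v): g_ig_j\in E(G)\}$. *)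

(* Defs.v *)
From mathcomp Require Import all_boot.
Set Implicit Arguments. Unset Strict Implicit. Unset Printing Implicit Defensive.

(* A finite simple graph on a finType T is a relation e : rel T that is
   symmetric and irreflexive. Colours {1,2} are encoded as bool. *)
Definition simple_graph (T : finType) (e : rel T) : Prop :=
  symmetric e /\ irreflexive e.

Definition independent (T : finType) (e : rel T) (S : {set T}) : bool :=
  [forall x in S, forall y in S, ~~ e x y].

Definition alpha (T : finType) (e : rel T) : nat :=
  \max_(S : {set T} | independent e S) #|S|.

Definition beta (T : finType) (e : rel T) : nat := #|T| - alpha e.

Definition is_OI2RD (T : finType) (e : rel T) (f : {ffun T -> {set bool}}) : bool :=
  [forall v, (f v == set0) ==>
     (\bigcup_(u | e v u) f u == [set: bool])]
  && independent e [set v | f v == set0].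

Definition weight (T : finType) (f : {ffun T -> {set bool}}) : nat :=
  \sum_(v : T) #|f v|.

(* minimum weight; default value 2|V| is the weight of the constant {1,2}
   function, which is always an OI2RD function, so this is the true minimum. *)
Definition gamma_oir2 (T : finType) (e : rel T) : nat :=
  \big[minn/(#|T|).*2]_(f : {ffun T -> {set bool}} | is_OI2RD e f) weight f.

Definition rooted_product (T1 T2 : finType) (eG : rel T1) (eH : rel T2) (v : T2)
  : rel (T1 * T2) :=
  fun x y => ((x.1 == y.1) && eH x.2 y.2)
             || [&& x.2 == v, y.2 == v & eG x.1 y.1].

(* Main.v *)
Require Import Defs.
From mathcomp Require Import all_boot.
Set Implicit Arguments. Unset Strict Implicit. Unset Printing Implicit Defensive.

Lemma oi2P (T : finType) (e : rel T) (f : {ffun T -> {set bool}}) :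
  reflect ((forall x, f x = set0 -> forall c, exists u, e x u /\ c \in f u) /\
           (forall x y, f x = set0 -> f y = set0 -> ~~ e x y)) (is_OI2RD e f).
Proof.
apply: (iffP andP) => [[H1 H2]|[H1 H2]]; split.
- move=> x fx c; move/forallP: H1 => /(_ x); rewrite fx eqxx /= => /eqP U.
  have : c \in [set: bool] by rewrite inE.
  rewrite -U => /bigcupP [u eu cu]; by exists u.
- move=> x y fx fy; move: H2 => /forallP/(_ x)/implyP.
  rewrite inE fx eqxx => /(_ isT) /forallP/(_ y)/implyP.
  rewrite inE fy eqxx; exact.
- apply/forallP => x; apply/implyP => /eqP fx.
  rewrite eqEsubset subsetT /=; apply/subsetP => c _.
  have [u [eu cu]] := H1 x fx c; apply/bigcupP; by exists u.
- apply/forallP => x; apply/implyP; rewrite inE => /eqP fx.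
  apply/forallP => y; apply/implyP; rewrite inE => /eqP fy; exact: H2.
Qed.

Lemma bigmin_le (I : eqType) (r : seq I) (P : pred I) (F : I -> nat) d i :
  i \in r -> P i -> \big[minn/d]_(j <- r | P j) F j <= F i.
Proof.
elim: r => [|a r IH] //=; rewrite inE big_cons => /orP [/eqP<-|ir] Pi.
  by rewrite Pi geq_minl.
case: (P a); last exact: IH. exact: leq_trans (geq_minr _ _) (IH ir Pi).
Qed.

Lemma gamma_le (T : finType) (e : rel T) f : is_OI2RD e f -> gamma_oir2 e <= weight f.
Proof. move=> Hf; apply: bigmin_le => //; exact: mem_index_enum. Qed.

Lemma gamma_attained (T : finType) (e : rel T) :
  exists f, is_OI2RD e f /\ weight f = gamma_oir2 e.
Proof.
rewrite /gamma_oir2.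
apply: (big_ind (fun x => exists f, is_OI2RD e f /\ weight f = x)).
- exists [ffun => [set: bool]]; split.
    apply/oi2P; split => [x|x y]; rewrite ffunE => /setP/(_ true); rewrite !inE //.
  rewrite /weight.
  have -> : \sum_(v : T) #|[ffun=> [set: bool]] v| = \sum_(v : T) 2.
    by apply: eq_bigr => x _; rewrite ffunE cardsT card_bool.
  by rewrite sum_nat_const muln2.
- move=> x y [f [Hf wf]] [g [Hg wg]]; rewrite /minn; case: ifP => _.
  by exists f. by exists g.
- move=> f Hf; by exists f.
Qed.

Lemma alpha_le (T : finType) (e : rel T) S : independent e S -> #|S| <= alpha e.
Proof. move=> HS; exact: (leq_bigmax_cond S). Qed.

Lemma alpha_attained (T : finType) (e : rel T) :
  exists S, independent e S /\ #|S| = alpha e.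
Proof.
rewrite /alpha.
apply: (big_ind (fun x => exists S, independent e S /\ #|S| = x)).
- exists set0; split; last by rewrite cards0.
  by apply/forallP => x; rewrite inE.
- move=> x y [f [Hf wf]] [g [Hg wg]]; rewrite /maxn; case: ifP => _.
  by exists g. by exists f.
- move=> S HS; by exists S.
Qed.

Lemma sum_root (T : finType) (v : T) (b : bool) :
  \sum_(h : T) ((h == v) && b : nat) = b.
Proof.
rewrite (bigD1 v) //= eqxx big1 ?addn0 // => h /negbTE ->; by [].
Qed.

Lemma sum_mem (T : finType) (A : {set T}) : \sum_(i : T) (i \in A : nat) = #|A|.
Proof.
rewrite -sum1_card [RHS]big_mkcond /=; apply: eq_bigr => i _; by case: (i \in A).
Qed.

Lemma weight_pair (T1 T2 : finType) (F : {ffun T1 * T2 -> {set bool}}) :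
  weight F = \sum_(i : T1) \sum_(h : T2) #|F (i, h)|.
Proof. by rewrite /weight pair_bigA; apply: eq_bigr => -[i h] _. Qed.

Theorem mainTheorem6 (TG TH : finType) (eG : rel TG) (eH : rel TH) (v : TH) :
  simple_graph eG -> simple_graph eH ->
  #|TG| * gamma_oir2 eH - alpha eG <= gamma_oir2 (rooted_product eG eH v)
  /\ gamma_oir2 (rooted_product eG eH v) <= #|TG| * gamma_oir2 eH + beta eG.
Proof.
move=> _ _; split.
-
  have [g [Hg wg]] := gamma_attained (rooted_product eG eH v).
  have [Hdom Hind] := oi2P _ _ Hg.
  set R := [set i | g (i, v) == set0].
  have RI : independent eG R.
    apply/forallP => i; apply/implyP; rewrite inE => /eqP gi.
    apply/forallP => j; apply/implyP; rewrite inE => /eqP gj.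
    apply/negP => eij; move: (Hind _ _ gi gj); by rewrite /rooted_product /= eqxx eij orbT.
  have bnd : forall i, gamma_oir2 eH <= \sum_(h : TH) #|g (i, h)| + (i \in R).
    move=> i.
    pose gi : {ffun TH -> {set bool}} :=
      [ffun h => if (h == v) && (i \in R) then [set true] else g (i, h)].
    have sub : forall h, g (i, h) \subset gi h.
      move=> h; rewrite ffunE; case: ifP => // /andP [/eqP -> ].
      by rewrite inE => /eqP ->; rewrite sub0set.
    have emp : forall h, gi h = set0 -> g (i, h) = set0 /\ h != v.
      move=> h; rewrite ffunE; case: ifP => [_ /setP/(_ true)|/negbT H E]; first by rewrite !inE.
      split => //; apply/negP => hv; move: H.
      by rewrite hv /= inE -(eqP hv) E eqxx.
    have Hgi : is_OI2RD eH gi.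
      apply/oi2P; split.
      + move=> h /emp [gh hv] c; have [[j w] [ru cu]] := Hdom _ gh c.
        move: ru; rewrite /rooted_product /= (negbTE hv) /= orbF => /andP [/eqP ij ehw]; move: cu; rewrite -ij => cu.
        exists w; split => //; exact: (subsetP (sub w)).
      + move=> x y /emp [gx _] /emp [gy _].
        apply/negP => exy; move: (Hind _ _ gx gy); by rewrite /rooted_product /= eqxx exy.
    apply: (leq_trans (gamma_le Hgi)).
    rewrite -(sum_root v (i \in R)) -big_split /=; apply: leq_sum => h _.
    rewrite ffunE; case: ifP => [/andP [hv iR]|_]; last exact: leq_addr.
    by rewrite cards1 leq_addl.
  rewrite leq_subLR.
  have : #|TG| * gamma_oir2 eH <= \sum_(i : TG) (\sum_(h : TH) #|g (i, h)| + (i \in R)).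
    rewrite -sum_nat_const; exact: leq_sum.
  rewrite big_split /= -weight_pair wg sum_mem => H.
  apply: (leq_trans H); rewrite [leqRHS]addnC leq_add2l; exact: alpha_le.
-
  have [f0 [Hf0 wf0]] := gamma_attained eH.
  have [Hdom Hind] := oi2P _ _ Hf0.
  have [S [SI cS]] := alpha_attained eG.
  pose F : {ffun TG * TH -> {set bool}} :=
    [ffun x => if (x.2 == v) && (x.1 \notin S) && (f0 v == set0) then [set true]
               else f0 x.2].
  have sub : forall x, f0 x.2 \subset F x.
    move=> x; rewrite ffunE; case: ifP => // /andP [/andP [/eqP -> _] /eqP ->].
    exact: sub0set.
  have emp : forall x, F x = set0 -> f0 x.2 = set0 /\ (x.2 == v -> x.1 \in S).
    move=> x; rewrite ffunE; case: ifP => [_ /setP/(_ true)|/negbT H E]; first by rewrite !inE.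
    split => // xv; move: H; by rewrite xv /= -(eqP xv) E eqxx andbT negbK.
  have HF : is_OI2RD (rooted_product eG eH v) F.
    apply/oi2P; split.
    + move=> [i h] /emp [fh _] c; have [u [eu cu]] := Hdom _ fh c.
      exists (i, u); split; first by rewrite /rooted_product /= eqxx eu.
      exact: (subsetP (sub (i, u))).
    + move=> x y /emp [fx xS] /emp [fy yS]; rewrite /rooted_product.
      apply/negP => /orP [/andP [_ e2]|/and3P [xv yv eg]].
        by have := Hind _ _ fx fy; rewrite e2.
      move: SI => /forallP/(_ x.1)/implyP/(_ (xS xv))/forallP/(_ y.1)/implyP/(_ (yS yv)).
      by rewrite eg.
  apply: (leq_trans (gamma_le HF)); rewrite weight_pair.
  apply: (@leq_trans (\sum_(i : TG) (\sum_(h : TH) #|f0 h| + (i \in ~: S)))).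
    apply: leq_sum => i _; rewrite -(sum_root v (i \in ~: S)) -big_split /=; apply: leq_sum => h _.
    rewrite ffunE /= in_setC; case: ifP => [/andP [/andP [-> ->] _]|_].
      by rewrite cards1 leq_addl.
    exact: leq_addr.
  rewrite big_split /= sum_mem -/(weight f0) wf0 sum_nat_const cardsCs setCK.
  by rewrite /beta cS.
Qed.
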